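(* Let $\mathcal{A}$ be a complex unital Banach algebra and let $x_1,x_2\in\mathcal{A}$ with $x_1x_2=0$. (i) If $x_1,x_2\in\mathcal{A}^d$, then $x_1+x_2\in\mathcal{A}^d$ and $$(x_1+x_2)^d=\sum_{n=1}^{i(x_2)}(1-x_2x_2^d)x_2^{n-1}(x_1^d)^n+\sum_{n=1}^{i(x_1)}(x_2^d)^nx_1^{n-1}(1-x_1x_1^d).$$ (ii) If $x_1+x_2\in\mathcal{A}^d$ and $x_2\in\mathcal{A}^d$, then $x_1\in\mathcal{A}^d$. If $x_1+x_2\in\mathcal{A}^d$ and $x_1\in\mathcal{A}^d$, then $x_2\in\mathcal{A}^d$ and $x_2^d=(x_1+x_2)^d-\big((x_1+x_2)^d\big)^2x_1$.
   Context: $\mathcal{A}$ is a complex unital Banach algebra with unit $1$. An element $a\in\mathcal{A}$ is Drazin invertible if there exists $b\in\mathcal{A}$ (the Drazin inverse, unique, denoted $a^d$) with $ab=ba$, $bab=b$, and $(a(1-ab))^n=0$ for some $n\in\mathbb{N}$; the smallest such $n$ is the Drazin index $i(a)$. $\mathcal{A}^d$ denotes the set of Drazin invertible elements of $\mathcal{A}$. *)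

(* Defs.v *)
From HB Require Import structures.
From mathcomp Require Import all_boot all_order all_algebra.
From mathcomp Require Import complex.
From mathcomp Require Import all_classical all_reals.
Set Implicit Arguments. Unset Strict Implicit. Unset Printing Implicit Defensive.
Import Order.TTheory GRing.Theory Num.Theory.
Local Open Scope ring_scope.

HB.mixin Record isBanachAlgebra (R : realType) A of GRing.Algebra R[i] A := {
  bnorm : A -> R;
  bnorm_ge0 : forall x : A, 0 <= bnorm x;
  bnorm_eq0 : forall x : A, bnorm x = 0 -> x = 0;
  bnormD : forall x y : A, bnorm (x + y) <= bnorm x + bnorm y;
  bnormZ : forall (l : R[i]) (x : A), ((bnorm (l *: x))%:C)%C = `|l| * ((bnorm x)%:C)%C;
  bnormM : forall x y : A, bnorm (x * y) <= bnorm x * bnorm y;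
  bnorm_complete : forall u : nat -> A,
    (forall e : R, 0 < e -> exists N : nat, forall m n : nat,
        (N <= m)%N -> (N <= n)%N -> bnorm (u m - u n) < e) ->
    exists l : A, forall e : R, 0 < e -> exists N : nat, forall n : nat,
        (N <= n)%N -> bnorm (u n - l) < e
}.

#[short(type="banachAlgType")]
HB.structure Definition BanachAlgebra (R : realType) :=
  {A of GRing.Algebra R[i] A & isBanachAlgebra R A}.

Section Drazin.
Variables (R : realType) (A : banachAlgType R).

Definition is_drazin_inverse (a b : A) : Prop :=
  [/\ a * b = b * a, b * a * b = b & exists n : nat, (a * (1 - a * b)) ^+ n = 0].

Definition drazin_invertible (a : A) : Prop := exists b, is_drazin_inverse a b.

(* the Drazin inverse a^d (chosen by choice; when a is Drazin invertible
   it is the (unique) Drazin inverse of a) *)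
Definition dinv (a : A) : A := xget 0 [set b | is_drazin_inverse a b].

Definition dindex (a : A) : nat :=
  xget 0%N [set n | (a * (1 - a * dinv a)) ^+ n = 0 /\
                   forall m, (a * (1 - a * dinv a)) ^+ m = 0 -> (n <= m)%N].
End Drazin.

(* Main.v *)
Require Import Defs.
From HB Require Import structures.
From mathcomp Require Import all_boot all_order all_algebra.
From mathcomp Require Import complex.
From mathcomp Require Import all_classical all_reals.
From mathcomp Require Import zify.
Import Order.TTheory GRing.Theory Num.Theory.
Local Open Scope ring_scope.
Set Implicit Arguments. Unset Strict Implicit.

Section S.
Variables (R : realType) (A : banachAlgType R).
Implicit Types a b c x y z w : A.

Lemma c2 x y z w : x*y = z -> w*x*y = w*z. Proof. by move=> E; rewrite -mulrA E. Qed.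
Lemma c3 x y u z w : x*y*u = z -> w*x*y*u = w*z.
Proof. by move=> E; rewrite -!mulrA (mulrA x) E. Qed.

Definition Dz a b k := [/\ a*b = b*a, b*a*b = b & a^+k * (1 - a*b) = 0].

Lemma Dz_bba a b k : Dz a b k -> b*b*a = b.
Proof. by case=> C E _; rewrite -mulrA -C mulrA E. Qed.
Lemma Dz_abb a b k : Dz a b k -> a*b*b = b.
Proof. by case=> C E _; rewrite C E. Qed.
Lemma idemCE a b : a*b = b*a -> b*a*b = b -> a*b*(a*b) = a*b.
Proof. by move=> C E; rewrite !mulrA -(mulrA a b a) -mulrA E. Qed.
Lemma paCE a b : a*b = b*a -> b*a*b = b -> a*(1-a*b) = (1-a*b)*a.
Proof. by move=> C E; rewrite mulrBr mulrBl mulr1 mul1r !mulrA -(mulrA a b a) -C mulrA. Qed.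
Lemma ppCE a b : a*b = b*a -> b*a*b = b -> (1-a*b)*(1-a*b) = 1-a*b.
Proof.
by move=> C E; rewrite mulrBl mul1r mulrBr mulr1 (idemCE C E) subrr subr0.
Qed.
Lemma Dz_idem a b k : Dz a b k -> a*b*(a*b) = a*b.
Proof. by case=> C E _; apply: idemCE. Qed.
Lemma Dz_pa a b k : Dz a b k -> a*(1-a*b) = (1-a*b)*a.
Proof. by case=> C E _; apply: paCE. Qed.
Lemma Dz_pp a b k : Dz a b k -> (1-a*b)*(1-a*b) = 1-a*b.
Proof. by case=> C E _; apply: ppCE. Qed.

Lemma pow_ap a b : a*b = b*a -> b*a*b = b -> forall n,
  (a*(1-a*b))^+n.+1 = a^+n.+1 * (1-a*b).
Proof.
move=> C E; elim=> [|n IH]; first by rewrite !expr1.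
rewrite exprSr IH (exprSr a n.+1) (paCE C E) mulrA -(mulrA (a^+n.+1)) (ppCE C E).
by rewrite -mulrA -(paCE C E) mulrA.
Qed.

Lemma Dz_of a b : is_drazin_inverse a b -> exists k, Dz a b k.
Proof.
case=> C E [[|n] Hn].
  by move: Hn; rewrite expr0 => /eqP; rewrite oner_eq0.
by exists n.+1; split=> //; rewrite -pow_ap.
Qed.

Lemma Dz_mono a b k m : Dz a b k -> (k <= m)%N -> Dz a b m.
Proof.
case=> C E H km; split=> //.
by rewrite -(subnK km) exprD -mulrA H mulr0.
Qed.

Lemma Dz_pX a b k : Dz a b k -> (1 - a*b) * a^+k = 0.
Proof.
move=> D; case: (D) => _ _ H; rewrite -H.
apply: commrX; exact: (esym (Dz_pa D)).
Qed.

Lemma Dz_is a b k : Dz a b k -> is_drazin_inverse a b.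
Proof.
move=> D; case: (D) => C E H; split=> //; exists k.+1.
by rewrite pow_ap // exprSr -mulrA (Dz_pa D) mulrA H mul0r.
Qed.

Lemma Dz_bpow a b k : Dz a b k -> forall n, b = b^+n.+1 * a^+n.
Proof.
move=> D n; case: (D) => C E _.
have h : b * (b*a)^+n = b.
  elim: n => [|n IH]; first by rewrite expr0 mulr1.
  by rewrite exprSr mulrA IH -C mulrA E.
by rewrite exprS -mulrA -exprMn_comm // h.
Qed.

Lemma Dz_bpow' a b k : Dz a b k -> forall n, b = a^+n * b^+n.+1.
Proof.
move=> D n; case: (D) => C E _.
rewrite {1}(Dz_bpow D n).
have : GRing.comm (b ^+ n.+1) (a^+n) by apply/commrX/commr_sym/commrX.
by [].
Qed.

Lemma intertw a a' b b' x k l : Dz a a' k -> Dz b b' l -> a*x = x*b -> a'*x = x*b'.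
Proof.
move=> Da Db ax.
have Da' := Dz_mono Da (leq_addr l k); have Db' := Dz_mono Db (leq_addl k l).
set N := (k + l)%N in Da' Db'.
have h1 : forall n, a^+n * x = x * b^+n.
  elim=> [|n IH]; first by rewrite !expr0 mul1r mulr1.
  by rewrite exprSr -mulrA ax mulrA IH exprSr mulrA.
have h2 : a' * x * (1 - b*b') = 0.
  rewrite (Dz_bpow Da' N) -(mulrA _ (a^+N)) h1 !mulrA -(mulrA _ (b^+N)).
  by case: Db' => _ _ ->; rewrite mulr0.
have h3 : (1 - a*a') * x * b' = 0.
  rewrite (Dz_bpow' Db' N) mulrA -(mulrA _ x) -h1 mulrA (Dz_pX Da') !mul0r.
  done.
have h2' : a'*x = a'*x*(b*b').
  by apply/subr0_eq; rewrite -{1}(mulr1 (a'*x)) -mulrBr.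
have h3' : x*b' = a*a'*x*b'.
  by apply/subr0_eq; rewrite -{1}(mul1r x) -mulrBl -mulrBl.
rewrite {1}h2' mulrA -(mulrA a') -ax mulrA.
by case: Da => C _ _; rewrite -C h3'.
Qed.

Lemma Dz_uniq a b c k l : Dz a b k -> Dz a c l -> b = c.
Proof. by move=> D1 D2; have := intertw D1 D2 (etrans (mulr1 a) (esym (mul1r a))); rewrite mulr1 mul1r. Qed.


Lemma subsub x y z : x - z - (y - z) = x - y.
Proof. by rewrite opprB addrA subrK. Qed.

Lemma partA s x2 t d2 k l : Dz s t k -> Dz x2 d2 l -> s*x2 = x2*x2 ->
  Dz (s - x2) (t - x2*t*t) k.+1.
Proof.
move=> D D2 sx2.
have e : t*x2 = x2*d2 := intertw D D2 sx2.
case: (D) => C E H; case: (D2) => C2 E2 _.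
have F : x2*t*t*x2 = t*x2.
  by rewrite e -mulrA e mulrA -(mulrA x2 t x2) e mulrA (c3 _ (Dz_abb D2)).
have Lxy : (s - x2)*(t - x2*t*t) = s*t - x2*t.
  by rewrite !mulrBr !mulrBl ?mulrA sx2 subrr subr0.
have Lyx : (t - x2*t*t)*(s - x2) = s*t - x2*t.
  rewrite !mulrBr !mulrBl ?mulrA F subrr subr0 -?mulrA -C (mulrA t s t) E.
  by rewrite C.
split.
- by rewrite Lxy Lyx.
- rewrite Lyx !mulrBr !mulrBl ?mulrA (Dz_abb D).
  have G1 : s*t*x2 = x2*x2*d2.
    by rewrite -mulrA e mulrA sx2.
  have G2 : x2*t*x2 = x2*x2*d2 by rewrite -mulrA e mulrA.
  by rewrite G1 G2 subrr subr0.
- have P : forall n, (s-x2)^+n.+1 = (s-x2)*s^+n.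
    have P1 : (s-x2)*s = (s-x2)*(s-x2).
      by rewrite [in RHS]mulrBr [(s - x2) * x2]mulrBl sx2 subrr subr0.
    elim=> [|n IH]; first by rewrite expr1 expr0 mulr1.
    by rewrite exprS IH mulrA -P1 -mulrA -exprS.
  have Q : forall n, s^+n * x2 = x2^+n.+1.
    elim=> [|n IH]; first by rewrite expr0 mul1r expr1.
    by rewrite exprSr -mulrA sx2 mulrA IH -exprSr.
  rewrite Lxy P opprB addrCA mulrDr -[X in _ + X = 0]mulrA H mulr0 addr0.
  have X0 : (s - x2)*x2 = 0 by rewrite mulrBl sx2 subrr.
  by rewrite mulrA -(mulrA (s-x2)) Q exprS mulrA X0 !mul0r.
Qed.

Lemma partB s x1 t d1 k l : Dz s t k -> Dz x1 d1 l -> x1*s = x1*x1 ->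
  Dz (s - x1) (t - t*t*x1) k.+1.
Proof.
move=> D D1 xs.
have e : d1*x1 = x1*t := intertw D1 D (esym xs).
case: (D) => C E H; case: (D1) => C1 E1 _.
have F : x1*t*t*x1 = x1*t.
  by rewrite -e -(mulrA d1 x1 t) -e mulrA (Dz_bba D1).
have Lxy : (s - x1)*(t - t*t*x1) = s*t - t*x1.
  by rewrite !mulrBr !mulrBl ?mulrA (Dz_abb D) F subsub.
have Lyx : (t - t*t*x1)*(s - x1) = s*t - t*x1.
  by rewrite !mulrBr !mulrBl ?mulrA (c2 _ xs) ?mulrA subsub C.
have Cxy : (s - x1)*(t - t*t*x1) = (t - t*t*x1)*(s - x1) by rewrite Lxy Lyx.
have Exy : (t - t*t*x1)*(s - x1)*(t - t*t*x1) = t - t*t*x1.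
  rewrite Lyx !mulrBr !mulrBl ?mulrA (Dz_abb D).
  rewrite -(mulrA t x1 t) -(mulrA t (x1*t) t) -(mulrA t (x1*t*t) x1) F mulrA.
  by rewrite subsub.
split=> //.
have P : forall n, (s-x1)^+n.+1 = s^+n*(s-x1).
  have P1 : s*(s-x1) = (s-x1)*(s-x1).
    by rewrite [in RHS]mulrBl [x1 * (s - x1)]mulrBr xs subrr subr0.
  elim=> [|n IH]; first by rewrite expr1 expr0 mul1r.
  by rewrite exprSr IH -mulrA -P1 mulrA -exprSr.
have Q : forall n, x1 * s^+n = x1^+n.+1.
  elim=> [|n IH]; first by rewrite expr0 mulr1 expr1.
  by rewrite exprSr mulrA IH exprSr -mulrA xs mulrA -!exprSr.
have X0 : x1*(s - x1) = 0 by rewrite mulrBr xs subrr.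
have cm : GRing.comm ((s - x1) ^+ k.+1) (1 - (s - x1)*(t - t*t*x1)).
  apply/commr_sym/commrX; exact: (esym (paCE Cxy Exy)).
rewrite cm Lxy P opprB addrCA mulrDl [X in _ + X]mulrA (Dz_pX D) mul0r addr0.
by rewrite mulrA -(mulrA t x1) Q exprSr mulrA -mulrA X0 mulr0.
Qed.

Lemma shift_sum (F : nat -> A) m : F m.+1 = 0 ->
  \sum_(0 <= n < m.+1) F n.+1 = \sum_(0 <= n < m.+1) F n - F 0%N.
Proof.
move=> H.
have h1 : \sum_(0 <= i < m.+2) F i = F 0%N + \sum_(0 <= i < m.+1) F i.+1.
  exact: big_nat_recl.
have h2 : \sum_(0 <= i < m.+2) F i = \sum_(0 <= i < m.+1) F i + F m.+1.
  exact: big_nat_recr.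
by apply: (addrI (F 0%N)); rewrite -h1 h2 H addr0 addrC subrK.
Qed.

Lemma addid (V : zmodType) (a b c d e : V) :
  a + (b - (a - d)) + c = b + (c - (e - d)) + e.
Proof.
transitivity (b + (c + d)).
  by rewrite opprB (addrCA a b) (addrC a (d - a)) subrK -addrA (addrC d c).
by rewrite opprB (addrA c d) -(addrA b) subrK.
Qed.

Lemma expand a b n : a*b = 0 ->
  (a+b)^+n = \sum_(0 <= j < n.+1) b^+(n-j) * a^+j.
Proof.
move=> ab; elim: n => [|n IH]; first by rewrite big_nat1 !expr0 mulr1.
rewrite exprSr IH mulr_suml.
under eq_bigr => j _ do rewrite mulrDr -mulrA -exprSr.
rewrite big_split /= [X in _ + X]big_nat_recl // [X in _ + (_ + X)]big1; last first.
  by move=> j _; rewrite (exprSr a) !mulrA -mulrA ab mulr0.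
rewrite [in RHS]big_nat_recl // !subn0 !expr0 !mulr1 addr0 -exprSr addrC.
by under [in RHS]eq_bigr => i _ do rewrite subSS.
Qed.

Section PartI.
Variables (x1 x2 d1 d2 : A) (m : nat).
Hypothesis x12 : x1 * x2 = 0.
Hypothesis D1 : Dz x1 d1 m.+1.
Hypothesis D2 : Dz x2 d2 m.+1.

Definition fI n := (1 - x2*d2) * x2^+n * d1^+n.+1.
Definition gI n := d2^+n.+1 * x1^+n * (1 - x1*d1).
Definition hI n := (1 - x2*d2) * x2^+n * d1^+n * (x1*d1).
Definition kI n := x2*d2*d2^+n*x1^+n*(1 - x1*d1).
Definition yI := \sum_(0 <= n < m.+1) fI n + \sum_(0 <= n < m.+1) gI n.

Let C1 : x1*d1 = d1*x1. Proof. by case: D1. Qed.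
Let E1 : d1*x1*d1 = d1. Proof. by case: D1. Qed.
Let C2 : x2*d2 = d2*x2. Proof. by case: D2. Qed.
Let E2 : d2*x2*d2 = d2. Proof. by case: D2. Qed.
Let b1 : d1*x2 = 0. Proof. by rewrite -(Dz_bba D1) -mulrA x12 mulr0. Qed.
Let b2 : x1*d2 = 0. Proof. by rewrite -(Dz_abb D2) !mulrA x12 !mul0r. Qed.
Let b3 : d1*d2 = 0. Proof. by rewrite -(Dz_abb D2) !mulrA b1 !mul0r. Qed.
Let x1p2 : x1*(1-x2*d2) = x1. Proof. by rewrite mulrBr mulr1 mulrA x12 mul0r subr0. Qed.
Let p1x2 : (1 - x1*d1)*x2 = x2. Proof. by rewrite mulrBl mul1r -mulrA b1 mulr0 subr0. Qed.
Let d1p2 : d1*(1-x2*d2) = d1. Proof. by rewrite mulrBr mulr1 mulrA b1 mul0r subr0. Qed.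
Let p1d2 : (1-x1*d1)*d2 = d2. Proof. by rewrite mulrBl mul1r -mulrA b3 mulr0 subr0. Qed.
Let e2p2 : x2*d2*(1 - x2*d2) = 0. Proof. by rewrite mulrBr mulr1 (Dz_idem D2) subrr. Qed.
Let p1e1 : (1 - x1*d1)*(x1*d1) = 0. Proof. by rewrite mulrBl mul1r (Dz_idem D1) subrr. Qed.
Let x1d2n n : x1*d2^+n.+1 = 0. Proof. by rewrite exprS mulrA b2 mul0r. Qed.
Let d1x2n n : d1*x2^+n.+1 = 0. Proof. by rewrite exprS mulrA b1 mul0r. Qed.
Let d1d2n n : d1*d2^+n.+1 = 0. Proof. by rewrite exprS mulrA b3 mul0r. Qed.
Let x1nx2 n : x1^+n.+1*x2 = 0. Proof. by rewrite exprSr -mulrA x12 mulr0. Qed.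
Let d1ne1 n : d1^+n.+1*(x1*d1) = d1^+n.+1.
Proof. by rewrite exprSr -mulrA (mulrA d1 x1 d1) E1. Qed.
Let e2d2n n : x2*d2*d2^+n.+1 = d2^+n.+1.
Proof. by rewrite exprS mulrA (Dz_abb D2). Qed.
Let x2np2 i : (m.+1 <= i)%N -> x2^+i*(1-x2*d2) = 0.
Proof. by move=> h; case: (Dz_mono D2 h). Qed.
Let p2x2n i : (m.+1 <= i)%N -> (1-x2*d2)*x2^+i = 0.
Proof. by move=> h; exact: (Dz_pX (Dz_mono D2 h)). Qed.
Let x1np1 i : (m.+1 <= i)%N -> x1^+i*(1-x1*d1) = 0.
Proof. by move=> h; case: (Dz_mono D1 h). Qed.

Let L_x1f0 : x1 * fI 0 = x1*d1.
Proof. by rewrite /fI expr0 expr1 mulr1 mulrA x1p2. Qed.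
Let L_x1fS n : x1 * fI n.+1 = 0.
Proof. by rewrite /fI !mulrA x1p2 (exprS x2) mulrA x12 !mul0r. Qed.
Let L_x2f n : x2 * fI n = hI n.+1.
Proof.
rewrite /fI /hI -[in RHS]mulrA d1ne1 !mulrA (Dz_pa D2) -(mulrA (1 - x2*d2) x2) -exprS.
by [].
Qed.
Let L_fs n : fI n * (x1 + x2) = hI n.
Proof.
rewrite /fI /hI mulrDr (exprSr d1) !mulrA -(mulrA _ d1 x2) b1 mulr0 addr0.
by rewrite -!mulrA C1.
Qed.
Let L_sg n : (x1 + x2) * gI n = kI n.
Proof.
by rewrite /gI /kI mulrDl !mulrA x1d2n !mul0r add0r exprS !mulrA.
Qed.
Let L_gx1 n : gI n * x1 = kI n.+1.
Proof.
rewrite /gI /kI -mulrA -(Dz_pa D1) mulrA -(mulrA _ (x1^+n)) -exprSr.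
by rewrite e2d2n.
Qed.
Let L_gx2_0 : gI 0 * x2 = x2*d2.
Proof. by rewrite /gI expr0 expr1 mulr1 -mulrA p1x2 C2. Qed.
Let L_gx2_S n : gI n.+1 * x2 = 0.
Proof. by rewrite /gI -mulrA p1x2 -mulrA x1nx2 mulr0. Qed.

Let hK : hI m.+1 = 0.
Proof. by rewrite /hI p2x2n // !mul0r. Qed.
Let kK : kI m.+1 = 0.
Proof. by rewrite /kI -mulrA x1np1 // mulr0. Qed.
Let h0 : hI 0 = (1 - x2*d2)*(x1*d1). Proof. by rewrite /hI !expr0 !mulr1. Qed.
Let k0 : kI 0 = x2*d2*(1 - x1*d1). Proof. by rewrite /kI !expr0 !mulr1. Qed.

Let sum_x1f : \sum_(0 <= n < m.+1) x1 * fI n = x1*d1.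
Proof. by rewrite big_nat_recl // L_x1f0 big1 ?addr0 // => i _; exact: L_x1fS. Qed.
Let sum_gx2 : \sum_(0 <= n < m.+1) gI n * x2 = x2*d2.
Proof. by rewrite big_nat_recl // L_gx2_0 big1 ?addr0 // => i _; exact: L_gx2_S. Qed.

Lemma sy_eq : (x1+x2) * yI =
  x1*d1 + (\sum_(0 <= n < m.+1) hI n - hI 0) + \sum_(0 <= n < m.+1) kI n.
Proof.
rewrite /yI mulrDr !mulr_sumr.
under eq_bigr => i _ do rewrite mulrDl L_x2f.
rewrite big_split /= sum_x1f shift_sum //.
by under eq_bigr => i _ do rewrite L_sg.
Qed.

Lemma ys_eq : yI * (x1+x2) =
  \sum_(0 <= n < m.+1) hI n + (\sum_(0 <= n < m.+1) kI n - kI 0) + x2*d2.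
Proof.
rewrite /yI mulrDl !mulr_suml.
under eq_bigr => i _ do rewrite L_fs.
under [X in _ + X]eq_bigr => i _ do rewrite mulrDr L_gx1.
by rewrite big_split /= sum_gx2 shift_sum // addrA.
Qed.

Lemma comm_y : (x1+x2) * yI = yI * (x1+x2).
Proof.
rewrite sy_eq ys_eq h0 k0 mulrBl mul1r mulrBr mulr1.
exact: addid.
Qed.

Let d1y : d1 * yI = d1*d1.
Proof.
rewrite /yI mulrDr !mulr_sumr big_nat_recl // big1; last first.
  by move=> i _; rewrite /fI !mulrA d1p2 d1x2n !mul0r.
rewrite [X in _ + X]big1; last by move=> i _; rewrite /gI !mulrA d1d2n !mul0r.
by rewrite /fI !mulrA d1p2 expr0 mulr1 expr1 !addr0.
Qed.
Let x1y : x1 * yI = x1*d1.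
Proof.
rewrite /yI mulrDr !mulr_sumr sum_x1f big1 ?addr0 //.
by move=> i _; rewrite /gI !mulrA x1d2n !mul0r.
Qed.
Let e2y : x2*d2 * yI = \sum_(0 <= n < m.+1) gI n.
Proof.
rewrite /yI mulrDr !mulr_sumr big1 ?add0r; last first.
  by move=> i _; rewrite /fI !mulrA e2p2 !mul0r.
by apply: eq_bigr => i _; rewrite /gI !mulrA e2d2n.
Qed.

Lemma yIw : yI * (x1+x2) * yI = yI.
Proof.
rewrite -mulrA comm_y.
set w := yI * (x1 + x2).
have d1w : d1 * w = d1.
  by rewrite /w mulrA d1y mulrDr -(mulrA d1 d1 x2) b1 mulr0 addr0 (Dz_bba D1).
have x1w : x1 * w = x1*d1*x1.
  by rewrite /w mulrA x1y mulrDr -(mulrA x1 d1 x2) b1 mulr0 addr0.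
have dw : d2 * w = d2*(x1*d1) + \sum_(0 <= n < m.+1) gI n.
  rewrite /w -comm_y mulrA [d2 * _]mulrDr mulrDl -mulrA x1y -C2 e2y.
  by [].
rewrite {2}/yI mulrDl !mulr_suml.
under eq_bigr => i _ do rewrite /fI (exprSr d1) -!mulrA d1w.
rewrite [X in _ + X]big_nat_recl // [X in _ + (_ + X)]big1 ?addr0; last first.
  move=> i _; rewrite /gI.
  have Z : (1 - x1*d1)*(x1*w) = 0 by rewrite x1w mulrA p1e1 mul0r.
  by rewrite (exprSr x1) -!mulrA (mulrA x1) (Dz_pa D1) -(mulrA (1 - x1*d1)) Z !mulr0.
rewrite {1}/gI expr0 expr1 mulr1 [d2 * (1 - _)]mulrBr mulr1 mulrBl dw.
rewrite -(mulrA d2 (x1*d1)) -(mulrA x1) d1w.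
rewrite (addrC (d2*(x1*d1))) addrK.
by congr (_ + _); apply: eq_bigr => i _; rewrite /fI exprSr !mulrA.
Qed.

Let pw i j : (j.+1 <= i)%N -> x2^+i * d2^+j.+1 = x2^+(i - j.+1) * (x2*d2).
Proof.
move=> h; rewrite -{1}(subnK h) exprD -mulrA -exprMn_comm //.
congr (_ * _); elim: j {h} => [|j IH]; first by rewrite expr1.
by rewrite exprS IH (Dz_idem D2).
Qed.

Let e2u : x2*d2*(1 - (x1+x2)*yI) = - \sum_(0 <= n < m.+1) kI n.+1.
Proof.
rewrite mulrBr mulr1 comm_y mulrA e2y mulr_suml.
under eq_bigr => i _ do rewrite mulrDr L_gx1.
by rewrite big_split /= sum_gx2 opprD addrCA subrr addr0.
Qed.

Let x1nu j : x1^+j.+1 * (1 - (x1+x2)*yI) = x1^+j.+1 * (1 - x1*d1).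
Proof.
elim: j => [|j IH].
  rewrite !expr1 mulrBr mulr1 mulrA [x1 * (x1 + x2)]mulrDr x12 addr0 -mulrA x1y.
  by rewrite mulrBr mulr1.
by rewrite exprS -mulrA IH mulrA.
Qed.

Lemma nil_y : (x1+x2)^+(m.+1 + m.+1) * (1 - (x1+x2)*yI) = 0.
Proof.
set N := (m.+1 + m.+1)%N.
have hN : (m.+1 <= N)%N by rewrite leq_addr.
rewrite (expand N x12) mulr_suml big_nat_recl // subn0 expr0 mulr1.
have P1 : x2^+N * (1 - (x1+x2)*yI) = - \sum_(0 <= n < m.+1)
     x2^+(N - n.+1) * (x2*d2) * x1^+n.+1 * (1-x1*d1).
  have xe : x2^+N = x2^+N * (x2*d2).
    by apply/subr0_eq; rewrite -{1}(mulr1 (x2^+N)) -mulrBr x2np2.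
  rewrite {1}xe -mulrA e2u mulrN mulr_sumr; congr (- _).
  apply: eq_big_nat => n /andP[_ hn].
  rewrite /kI e2d2n !mulrA pw; first by rewrite !mulrA.
  exact: leq_trans hn hN.
have P2 : \sum_(0 <= j < N) x2^+(N-j.+1) * x1^+j.+1 * (1 - (x1+x2)*yI) =
    \sum_(0 <= j < m.+1) x2^+(N-j.+1) * x1^+j.+1 * (1-x1*d1).
  rewrite (@big_cat_nat _ _ _ m.+1) //= [X in _ + X]big_nat_cond.
  rewrite [X in _ + X]big1 ?addr0; last first.
    by move=> j /andP[/andP[hj _] _]; rewrite -mulrA x1nu x1np1 ?mulr0 // ltnW.
  by apply: eq_bigr => j _; rewrite -mulrA x1nu mulrA.
rewrite P1 P2 addrC -sumrB big_nat_cond big1 // => j /andP[/andP[_ hj] _].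
rewrite -!mulrA -mulrBr (mulrA x2 d2) -{1}(mul1r (x1 ^+ j.+1 * (1 - x1*d1))) -mulrBl.
rewrite mulrA x2np2 ?mul0r //.
by move: hj; rewrite /N; lia.
Qed.

Lemma partI_Dz : Dz (x1+x2) yI (m.+1 + m.+1).
Proof. split; [exact: comm_y | exact: yIw | exact: nil_y]. Qed.

End PartI.

Lemma dinv_spec a : drazin_invertible a -> is_drazin_inverse a (dinv a).
Proof. by move=> h; apply: xgetPex. Qed.

Lemma Dz_dindex a : drazin_invertible a -> Dz a (dinv a) (dindex a).
Proof.
move=> h; have hs := dinv_spec h.
have [k Dk] := Dz_of hs.
have ex : exists n, (a * (1 - a * dinv a)) ^+ n == 0.
  by exists k.+1; case: (Dz_mono Dk (leqnSn k)) => C E H; rewrite pow_ap // H.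
have [n0 Hn0 Hmin] := ex_minnP ex.
have sp : (a * (1 - a * dinv a)) ^+ dindex a = 0 /\
   forall m, (a * (1 - a * dinv a)) ^+ m = 0 -> (dindex a <= m)%N.
  apply: (@xgetPex _ 0%N [set n | (a * (1 - a * dinv a)) ^+ n = 0 /\
       forall m, (a * (1 - a * dinv a)) ^+ m = 0 -> (n <= m)%N]).
  exists n0; split; first exact/eqP.
  by move=> m hm; apply: Hmin; apply/eqP.
case: sp; case: (hs) => C E _.
case E0 : (dindex a) => [|j].
  by rewrite expr0 => /eqP; rewrite oner_eq0.
by move=> hj _; split=> //; rewrite -pow_ap.
Qed.

End S.

Theorem corollary4p2 (R : realType) (A : banachAlgType R) (x1 x2 : A) :
  x1 * x2 = 0 ->
  ((drazin_invertible x1 -> drazin_invertible x2 ->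
      drazin_invertible (x1 + x2) /\
      dinv (x1 + x2) =
        \sum_(1 <= n < (dindex x2).+1)
           (1 - x2 * dinv x2) * x2 ^+ (n - 1) * dinv x1 ^+ n
      + \sum_(1 <= n < (dindex x1).+1)
           dinv x2 ^+ n * x1 ^+ (n - 1) * (1 - x1 * dinv x1))
   /\ (drazin_invertible (x1 + x2) -> drazin_invertible x2 ->
         drazin_invertible x1)
   /\ (drazin_invertible (x1 + x2) -> drazin_invertible x1 ->
         drazin_invertible x2 /\
         dinv x2 = dinv (x1 + x2) - dinv (x1 + x2) ^+ 2 * x1)).
Proof.
move=> x12; split; [|split].
- move=> h1 h2.
  have D1 := Dz_dindex h1; have D2 := Dz_dindex h2.
  set k1 := dindex x1 in D1 *; set k2 := dindex x2 in D2 *.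
  set d1 := dinv x1 in D1 *; set d2 := dinv x2 in D2 *.
  set m := (k1 + k2)%N.
  have l1 : (k1 <= m.+1)%N by rewrite /m; lia.
  have l2 : (k2 <= m.+1)%N by rewrite /m; lia.
  have D1' : Dz x1 d1 m.+1 := Dz_mono D1 l1.
  have D2' : Dz x2 d2 m.+1 := Dz_mono D2 l2.
  have DS := partI_Dz x12 D1' D2'.
  have hs : drazin_invertible (x1 + x2) by exists (yI x1 x2 d1 d2 m); exact: Dz_is DS.
  split=> //.
  have [k Dk] := Dz_of (dinv_spec hs).
  rewrite (Dz_uniq Dk DS) /yI.
  congr (_ + _).
  + rewrite big_add1 /=.
    rewrite (@big_cat_nat _ _ _ k2 0 m.+1) //=.
    rewrite [X in _ + X]big_nat_cond [X in _ + X]big1 ?addr0; last first.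
      move=> j /andP[/andP[hj _] _].
      by rewrite /fI (Dz_pX (Dz_mono D2 hj)) !mul0r.
    by apply: eq_bigr => i _; rewrite subn1 /=.
  + rewrite big_add1 /=.
    rewrite (@big_cat_nat _ _ _ k1 0 m.+1) //=.
    rewrite [X in _ + X]big_nat_cond [X in _ + X]big1 ?addr0; last first.
      move=> j /andP[/andP[hj _] _].
      by rewrite /gI -mulrA; case: (Dz_mono D1 hj) => _ _ ->; rewrite mulr0.
    by apply: eq_bigr => i _; rewrite subn1 /=.
- move=> hs h2.
  have [k Dk] := Dz_of (dinv_spec hs).
  have [l Dl] := Dz_of (dinv_spec h2).
  have sx2 : (x1 + x2) * x2 = x2 * x2 by rewrite mulrDl x12 add0r.
  have := partA Dk Dl sx2; rewrite addrK => D.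
  by exists (dinv (x1 + x2) - x2 * dinv (x1 + x2) * dinv (x1 + x2)); exact: Dz_is D.
- move=> hs h1.
  have [k Dk] := Dz_of (dinv_spec hs).
  have [l Dl] := Dz_of (dinv_spec h1).
  have xs : x1 * (x1 + x2) = x1 * x1 by rewrite mulrDr x12 addr0.
  have := partB Dk Dl xs; rewrite addrAC subrr add0r => D.
  split; first by exists (dinv (x1 + x2) - dinv (x1 + x2) * dinv (x1 + x2) * x1); exact: Dz_is D.
  have [k2 Dk2] := Dz_of (dinv_spec (ex_intro _ _ (Dz_is D))).
  by rewrite (Dz_uniq Dk2 D) expr2.
Qed.
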